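(* Let $D\subset\mathbb N^n$ be finite, not contained in any coordinate hyperplane, $p$ a prime. Let $U\in E_{D,p}(r)$ and $U'\in E_{D,p}(r')$ be minimal with $\varphi_U(0)=\varphi_{U'}(0)$, and define $V=(v_{\mathbf d})$ by $v_{\mathbf d}=p^ru'_{\mathbf d}+u_{\mathbf d}$. Then $V$ is a minimal element of $E_{D,p}(r+r')$, and its support satisfies $\varphi_V(i)=\varphi_{U'}(i)$ for $0\le i\le r'$ and $\varphi_V(i+r')=\varphi_U(i)$ for $1\le i\le r-1$.
   Context: $s_p$ = base-$p$ digit sum. $E_{D,p}(r)$ = set of $U=(u_{\mathbf d})\in\{0,\dots,p^r-1\}^D$ with $\sum u_{\mathbf d}\mathbf d\equiv0\pmod{p^r-1}$ and all coordinates of $\sum u_{\mathbf d}\mathbf d$ positive; $s_p(U)=\sum s_p(u_{\mathbf d})$; $\delta_p(D)=\frac1{p-1}\min_{r\ge1}\min_{U\in E_{D,p}(r)}s_p(U)/r$; $U\in E_{D,p}(r)$ is minimal if $s_p(U)=(p-1)r\delta_p(D)$. Shift $\delta_r$: $k\mapsto pk\bmod(p^r-1)$ for $k\le p^r-2$, $p^r-1\mapsto p^r-1$, coordinatewise. For $U\in E_{D,p}(r)$, $\varphi_U:\mathbb Z/r\mathbb Z\to\mathbb N_{>0}^n$, $\varphi_U(k)=\frac1{p^r-1}\sum\mathbf d(\delta_r^kU)_{\mathbf d}$ (indices taken modulo $r$). *)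

(* Defs.v *)
From mathcomp Require Import all_boot.
Set Implicit Arguments. Unset Strict Implicit. Unset Printing Implicit Defensive.

(* Points of N^n are n-tuples of naturals. A finite set D of N^n is a
   duplicate-free sequence. A family U = (u_d)_{d in D} is a function
   n.-tuple nat -> nat, of which only the values on D matter. *)
Definition pt n := n.-tuple nat.

(* base-p digit sum: k has at most k+1 base-p digits when p >= 2 *)
Definition sp (p k : nat) : nat := \sum_(i < k.+1) (k %/ p ^ i) %% p.

Definition spU n (D : seq (pt n)) (p : nat) (U : pt n -> nat) : nat :=
  \sum_(d <- D) sp p (U d).

Definition wsum n (D : seq (pt n)) (U : pt n -> nat) (j : 'I_n) : nat :=
  \sum_(d <- D) U d * tnth d j.

Definition inE n (D : seq (pt n)) (p r : nat) (U : pt n -> nat) : Prop :=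
  0 < r /\
  (forall d, d \in D -> U d <= p ^ r - 1) /\
  (forall j : 'I_n, (p ^ r - 1 %| wsum D U j) /\ 0 < wsum D U j).

(* U in E_{D,p}(r) is minimal: s_p(U)/r attains the minimum of
   s_p(U')/r' over all r' >= 1 and U' in E_{D,p}(r'),
   i.e. s_p(U) = (p-1) r delta_p(D). *)
Definition minimalE n (D : seq (pt n)) (p r : nat) (U : pt n -> nat) : Prop :=
  inE D p r U /\
  forall (r' : nat) (U' : pt n -> nat), inE D p r' U' ->
    spU D p U * r' <= spU D p U' * r.

Definition shift (p r k : nat) : nat :=
  if k == p ^ r - 1 then k else (p * k) %% (p ^ r - 1).

Definition phi n (D : seq (pt n)) (p r : nat) (U : pt n -> nat) (k : nat)
  : {ffun 'I_n -> nat} :=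
  [ffun j => (\sum_(d <- D) iter (k %% r) (shift p r) (U d) * tnth d j)
              %/ (p ^ r - 1)].

(* Main.v *)
Require Import Defs.
From mathcomp Require Import all_boot zify.
Set Implicit Arguments. Unset Strict Implicit. Unset Printing Implicit Defensive.

Definition dig (p k i : nat) := (k %/ p ^ i) %% p.

Lemma dig_ext p k N N' : 0 < p -> N <= N' -> k < p ^ N ->
  \sum_(0 <= i < N) dig p k i = \sum_(0 <= i < N') dig p k i.
Proof.
move=> p0 NN' kN; rewrite [in RHS](big_cat_nat _ (n:=N)) //=.
rewrite [X in _ = _ + X]big_nat_cond [X in _ = _ + X]big1 ?addn0 // => i /andP[/andP[Ni _] _].
rewrite /dig divn_small ?mod0n //; apply: (leq_trans kN); exact: leq_pexp2l.
Qed.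

Lemma sp_sum p k N : 1 < p -> k < p ^ N -> sp p k = \sum_(0 <= i < N) dig p k i.
Proof.
move=> p1 kN; have p0 : 0 < p by apply: ltnW.
rewrite /sp -(big_mkord (fun _ => true) (fun i => dig p k i)).
rewrite (@dig_ext p k k.+1 (N + k.+1)) ?leq_addl //; last first.
  by apply: ltn_trans (ltn_expl _ p1).
by rewrite (@dig_ext p k N (N + k.+1)) ?leq_addr.
Qed.

Lemma sp_add p r a b : 1 < p -> b < p ^ r -> sp p (p ^ r * a + b) = sp p a + sp p b.
Proof.
move=> p1 br; have p0 : 0 < p by apply: ltnW.
have pr0 : 0 < p ^ r by rewrite expn_gt0 p0.
have Vlt : p ^ r * a + b < p ^ (r + a.+1).
  rewrite expnD; have ha := ltnW (ltn_expl a.+1 p1).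
  apply: (@leq_trans (p ^ r * a.+1)); first by rewrite mulnS addnC ltn_add2r.
  by rewrite leq_mul2l ha orbT.
rewrite (sp_sum p1 Vlt) (big_cat_nat _ (n:=r)) ?leq_addr //= addnC.
rewrite (sp_sum p1 br) (sp_sum p1 (ltnW (ltn_expl a.+1 p1))).
congr (_ + _).
  rewrite -{1}(add0n r) big_addn addKn !big_nat; apply: eq_bigr => i _.
  by rewrite /dig [i + r]addnC expnD divnMA [p ^ r * a]mulnC divnMDl // (divn_small br) addn0.
rewrite !big_nat; apply: eq_bigr => i /andP[_ ir].
rewrite /dig.
have -> : p ^ r = p ^ (r - i).-1 * p * p ^ i.
  by rewrite -expnSr prednK ?subn_gt0 // -expnD subnK // ltnW.
rewrite (_ : _ * a = (p ^ (r - i).-1 * a * p) * p ^ i); last by lia.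
by rewrite divnMDl ?expn_gt0 ?p0 // modnMDl.
Qed.
Lemma mixed_lt a b A B : a < A -> b < B -> a * B + b < A * B.
Proof.
move=> aA bB; apply: (@leq_trans (a.+1 * B)); first by rewrite mulSn addnC ltn_add2r.
by rewrite leq_mul2r aA orbT.
Qed.

Lemma mixed_eq a b A B : a < A -> b < B -> a * B + b + 1 = A * B -> a.+1 = A /\ b.+1 = B.
Proof.
case: A => // A; case: B => // B aA bB e.
have e2 : a * B.+1 + b = A * B.+1 + B by lia.
have h1 := congr1 (divn^~ B.+1) e2; have h2 := congr1 (modn^~ B.+1) e2.
rewrite /= !divnMDl // !divn_small // !addn0 in h1.
rewrite /= !modnMDl !modn_small // in h2.
by rewrite h1 h2.
Qed.

Lemma rot_core p R P K q m' t : 0 < p -> 0 < P -> 0 < K -> q < P -> m' < K -> t < p ->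
  p ^ R = P * (K * p) ->
  shift p R ((t * K + m') * P + q) = m' * (P * p) + (q * p + t).
Proof.
move=> p0 P0 K0 qP mK tp eR.
have mlt : t * K + m' < p * K by apply: mixed_lt.
have pos : 0 < P * (K * p) by rewrite !muln_gt0 P0 K0 p0.
rewrite /shift eR; case: ifP => [/eqP E | /negbT NE].
  have E1 : (t * K + m') * P + q + 1 = (K * p) * P by lia.
  have [Ea Eq] := mixed_eq (ltac:(lia) : t * K + m' < K * p) qP E1.
  have E2 : t * K + m' + 1 = p * K by lia.
  have [Et Em] := mixed_eq tp mK E2.
  rewrite -Et -Em -Eq; lia.
move: NE; set M := P * (K * p) - 1 => NE.
have eM : P * (K * p) = M.+1 by rewrite /M; lia.
set X := m' * (P * p) + (q * p + t).
have eX : p * ((t * K + m') * P + q) = t * M + X.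
  have : p * ((t * K + m') * P + q) + t = t * M.+1 + X by rewrite -eM /X; lia.
  lia.
rewrite eX modnMDl modn_small //.
have Xe : X = (m' * P + q) * p + t by rewrite /X; lia.
have Y := mixed_lt mK qP.
have Xlt : X < (K * P) * p by rewrite Xe; apply: mixed_lt.
have : X <= M by lia.
rewrite leq_eqVlt => /orP[/eqP XM|//].
exfalso; move: NE; apply/negP/negPn/eqP.
have E3 : (m' * P + q) * p + t + 1 = (K * P) * p by lia.
have [Ea Et] := mixed_eq Y tp E3.
have E4 : m' * P + q + 1 = K * P by lia.
have [Em Eq] := mixed_eq mK qP E4.
rewrite /M -Et -Em -Eq; lia.
Qed.

Definition rot p R i w := w %% p ^ (R - i) * p ^ i + w %/ p ^ (R - i).

Lemma rot_step p R i w : 0 < p -> i < R -> w < p ^ R ->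
  shift p R (rot p R i w) = rot p R i.+1 w.
Proof.
move=> p0 iR wR.
set k := R - i.+1.
have ek : R - i = k.+1 by rewrite /k; lia.
have eR : p ^ R = p ^ i * (p ^ k * p).
  by rewrite -expnSr -expnD; congr (_ ^ _); rewrite /k; lia.
rewrite /rot ek expnSr [p ^ i.+1]expnSr.
move: wR; rewrite eR.
have P0 : 0 < p ^ i by rewrite expn_gt0 p0.
have K0 : 0 < p ^ k by rewrite expn_gt0 p0.
move: eR P0 K0; move: (p ^ i) (p ^ k) => P K eR P0 K0 wlt.
have Kp0 : 0 < K * p by rewrite muln_gt0 K0 p0.
set q := w %/ (K * p); set m := w %% (K * p).
have ew : w = q * (K * p) + m by rewrite /q /m -divn_eq.
have mlt : m < K * p by rewrite /m ltn_pmod.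
have qlt : q < P by rewrite /q ltn_divLR.
set t := m %/ K; set m' := m %% K.
have em : m = t * K + m' by rewrite /t /m' -divn_eq.
have m'lt : m' < K by rewrite /m' ltn_pmod.
have tlt : t < p by rewrite /t ltn_divLR // mulnC.
have h1 : w %/ K = q * p + t.
  by rewrite ew (_ : q * (K * p) = (q * p) * K) ?divnMDl //; lia.
have h2 : w %% K = m'.
  by rewrite ew (_ : q * (K * p) = (q * p) * K) ?modnMDl //; lia.
rewrite h1 h2 em; exact: rot_core.
Qed.

Lemma iter_rot p R i w : 0 < p -> i <= R -> w < p ^ R ->
  iter i (shift p R) w = rot p R i w.
Proof.
move=> p0 iR wR; elim: i iR => [|i IH] iR.
  rewrite /rot subn0 expn0 muln1 (modn_small wR) (divn_small wR) addn0; exact: erefl.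
rewrite iterS IH; last exact: ltnW.
exact: rot_step.
Qed.

Lemma iter_R p R w : 0 < p -> w < p ^ R -> iter R (shift p R) w = w.
Proof.
move=> p0 wR; rewrite iter_rot // /rot subnn expn0 modn1 divn1 //.
Qed.

Lemma iter_mod p R k w : 0 < p -> w < p ^ R ->
  iter (k %% R) (shift p R) w = iter k (shift p R) w.
Proof.
move=> p0 wR.
have H : forall j, iter (j * R) (shift p R) w = w.
  elim=> [|j IH] //; by rewrite mulSn iterD IH iter_R.
by rewrite {2}(divn_eq k R) addnC iterD H.
Qed.

Lemma rot_id p R i w : 0 < p -> i <= R ->
  rot p R i w + (p ^ R - 1) * (w %/ p ^ (R - i)) = p ^ i * w.
Proof.
move=> p0 iR; rewrite /rot.
have eR : p ^ R = p ^ (R - i) * p ^ i by rewrite -expnD subnK.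
have pR : 0 < p ^ R by rewrite expn_gt0 p0.
have ew := divn_eq w (p ^ (R - i)).
move: ew pR; rewrite eR; move: (p ^ (R - i)) (p ^ i) (w %/ _) (w %% _) => A B Q m ew pR.
rewrite [in RHS]ew.
have -> : (A * B - 1) * Q = A * B * Q - Q by rewrite mulnBl mul1n.
have : Q <= A * B * Q by rewrite leq_pmull.
lia.
Qed.

Lemma phi_id n (D : seq (pt n)) p R (W : pt n -> nat) k (j : 'I_n) c :
  1 < p -> 0 < R -> k <= R -> (forall d, d \in D -> W d < p ^ R) ->
  wsum D W j = (p ^ R - 1) * c ->
  phi D p R W k j + \sum_(d <- D) (W d %/ p ^ (R - k)) * tnth d j = p ^ k * c.
Proof.
move=> p1 R0 kR WR ew.
have p0 : 0 < p by apply: ltnW.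
have M0 : 0 < p ^ R - 1.
  have : p <= p ^ R by rewrite -{1}(expn1 p) leq_pexp2l.
  lia.
rewrite /phi ffunE.
set S := \sum_(d <- D) _.
set Qs := \sum_(d <- D) _.
have eS : S = \sum_(d <- D) rot p R k (W d) * tnth d j.
  apply: eq_big_seq => d dD; by rewrite iter_mod ?WR // iter_rot ?WR.
have key : S + (p ^ R - 1) * Qs = (p ^ R - 1) * (p ^ k * c).
  rewrite eS /Qs big_distrr -big_split /=.
  rewrite mulnCA -ew /wsum big_distrr /=; apply: eq_bigr => d _.
  by rewrite mulnA -mulnDl rot_id // mulnA.
have le : Qs <= p ^ k * c.
  by rewrite -(leq_pmul2l M0) -key leq_addl.
have -> : S = (p ^ R - 1) * (p ^ k * c - Qs).
  by rewrite mulnBr -key addnK.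
by rewrite mulKn // subnK.
Qed.

Lemma pow_big p r : 1 < p -> 0 < r -> exists A, p ^ r = A.+2.
Proof.
move=> p1 r0; have : p <= p ^ r by rewrite -{1}(expn1 p) leq_pexp2l // ltnW.
move: (p ^ r) => x; exists x.-2; lia.
Qed.

Lemma arith_end X Y P Q C B :
  X + (P * ((B.+2 - 1) * C) + Q) = P * B.+2 * C -> Y + Q = P * C -> X = Y.
Proof. lia. Qed.

Theorem lemma2p12 (n : nat) (D : seq (pt n)) (p r r' : nat)
    (U U' : pt n -> nat) :
  uniq D ->
  (forall j : 'I_n, exists2 d, d \in D & tnth d j != 0) ->
  prime p ->
  minimalE D p r U -> minimalE D p r' U' ->
  phi D p r U 0 = phi D p r' U' 0 ->
  let V := fun d => p ^ r * U' d + U d in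
  minimalE D p (r + r') V /\
  (forall i, i <= r' -> phi D p (r + r') V i = phi D p r' U' i) /\
  (forall i, 1 <= i <= r - 1 -> phi D p (r + r') V (i + r') = phi D p r U i).
Proof.
move=> _ _ pp [[r0 [Ub Udiv]] Umin] [[r'0 [U'b U'div]] U'min] eqphi V.
have p1 : 1 < p by apply: prime_gt1.
have p0 : 0 < p by apply: ltnW.
have [A eA] := pow_big p1 r0.
have [B eB] := pow_big p1 r'0.
have eR : p ^ (r + r') = A.+2 * B.+2 by rewrite expnD eA eB.
have UR : forall d, d \in D -> U d < p ^ r by move=> d /Ub; rewrite eA; lia.
have U'R : forall d, d \in D -> U' d < p ^ r' by move=> d /U'b; rewrite eB; lia.
have VR : forall d, d \in D -> V d < p ^ (r + r').
  move=> d dD; rewrite /V expnD mulnC [p ^ r * p ^ r']mulnC; apply: mixed_lt; auto.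
pose c j := wsum D U j %/ (p ^ r - 1).
have ec : forall j, wsum D U j = (p ^ r - 1) * c j.
  by move=> j; rewrite mulnC divnK //; case: (Udiv j).
have ec' : forall j, wsum D U' j = (p ^ r' - 1) * c j.
  move=> j; have := congr1 (fun f : {ffun 'I_n -> nat} => f j) eqphi.
  rewrite /phi !ffunE !mod0n /= => E.
  rewrite /c /wsum E mulnC divnK //; case: (U'div j) => //.
have eV : forall j, wsum D V j = p ^ r * wsum D U' j + wsum D U j.
  move=> j; rewrite /wsum big_distrr -big_split /=; apply: eq_bigr => d _.
  by rewrite /V mulnDl mulnA.
have ecV : forall j, wsum D V j = (p ^ (r + r') - 1) * c j.
  move=> j; rewrite eV ec ec' eR eA eB; lia.
have inV : Defs.inE D p (r + r') V.
  split; first by lia.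
  split; first by move=> d /VR; lia.
  move=> j; split; first by rewrite ecV dvdn_mulr.
  rewrite eV; case: (Udiv j) => _; lia.
have spV : spU D p V = spU D p U' + spU D p U.
  rewrite /spU -big_split /=; apply: eq_big_seq => d dD.
  by rewrite /V (@sp_add p r (U' d) (U d) p1 (UR d dD)).
split.
  split => // r'' W hW; rewrite spV.
  have := Umin r'' W hW; have := U'min r'' W hW; lia.
split.
  move=> i ir'; apply/ffunP => j.
  have h1 := @phi_id n D p (r + r') V i j (c j) p1 ltac:(lia) ltac:(lia) VR (ecV j).
  have h2 := @phi_id n D p r' U' i j (c j) p1 r'0 ir' U'R (ec' j).
  have eq : \sum_(d <- D) V d %/ p ^ (r + r' - i) * tnth d j =
            \sum_(d <- D) U' d %/ p ^ (r' - i) * tnth d j.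
    apply: eq_big_seq => d dD; congr (_ * _).
    rewrite -addnBA // expnD divnMA /V mulnC divnMDl ?expn_gt0 ?p0 //.
    by rewrite (divn_small (UR d dD)) addn0.
  rewrite eq in h1; apply/eqP; rewrite -(eqn_add2r (\sum_(d <- D) U' d %/ p ^ (r' - i) * tnth d j)).
  by rewrite h1 h2.
move=> i /andP[i1 ir]; apply/ffunP => j.
have h1 := @phi_id n D p (r + r') V (i + r') j (c j) p1 ltac:(lia) ltac:(lia) VR (ecV j).
have h2 := @phi_id n D p r U i j (c j) p1 r0 ltac:(lia) UR (ec j).
have eq : \sum_(d <- D) V d %/ p ^ (r + r' - (i + r')) * tnth d j =
          p ^ i * wsum D U' j + \sum_(d <- D) U d %/ p ^ (r - i) * tnth d j.
  rewrite /wsum big_distrr -big_split /=.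
  apply: eq_big_seq => d dD.
  have -> : r + r' - (i + r') = r - i by lia.
  have -> : V d = (p ^ i * U' d) * p ^ (r - i) + U d.
    have ir2 : i <= r by lia.
    by rewrite /V mulnAC -expnD (subnKC ir2).
  by rewrite divnMDl ?expn_gt0 ?p0 // mulnDl mulnA.
rewrite eq ec' expnD in h1.
rewrite eB in h1; exact: arith_end h1 h2.
Qed.
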